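(* Let $\mathcal{G}=(\mathcal{V},\mathcal{E},\mathcal{W})$ be a directed graph with nonnegative edge weights $w_{(x,y)}$ (with $w_{(x,y)}=0$ when $(x,y)\notin\mathcal{E}$). Let $d(x)=\sum_{y\in\operatorname{Nei}(x)} w_{(x,y)}$ be the generalized out-degree and $N^{in}(y)=\{x : w_{(x,y)}>0\}$ the in-neighbors. Fix $\alpha\in(0,1)$, $\epsilon>0$ and a source node $s\in\mathcal{V}$. Suppose vectors $p_s,r_s\in\mathbb{R}^{\mathcal{V}}$ satisfy the invariant $$p_s(i)+\alpha r_s(i)=(1-\alpha)\sum_{x\in N^{in}(i)}\frac{w_{(x,i)}\,p_s(x)}{d(x)}+\alpha\,1_{i=s}\qquad\text{for all } i\in\mathcal{V}.\qquad (\ast)$$ Consider an edge event $(u,v,\Delta w_{(u,v)})$ with $\Delta w_{(u,v)}\in\mathbb{R}$, transforming $\mathcal{G}$ into $\mathcal{G}'$ with weights $w'_{(u,v)}=w_{(u,v)}+\Delta w_{(u,v)}\ge 0$ and all other weights unchanged, so that $d'(u)=d(u)+\Delta w_{(u,v)}$; assume $d(u)>0$ and $d'(u)>0$. Define $p_s',r_s'$ to agree with $p_s,r_s$ except $$p'_s(u)=p_s(u)\,\frac{d(u)+\Delta w_{(u,v)}}{d(u)},\qquad r'_s(u)=r_s(u)-\frac{\Delta w_{(u,v)}\,p_s(u)}{\alpha\, d(u)},\qquad r'_s(v)=r_s(v)+\frac{1-\alpha}{\alpha}\,\frac{\Delta w_{(u,v)}\,p_s(u)}{d(u)}$$ (all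 right-hand sides computed from the values before the event; if $u=v$ both residual updates are applied to $r_s(u)$). Then $p'_s,r'_s$ satisfy the invariant $(\ast)$ with respect to $\mathcal{G}'$ (i.e., with $w',d'$ in place of $w,d$). Consequently, applying these rules successively to each event of a sequence of edge events (each time with respect to the current graph) and then running the weighted forward push procedure on the final graph yields vectors $p_s,r_s$ that satisfy $(\ast)$ with respect to the final graph and, upon termination, satisfy $|r_s(i)|\le\epsilon\, d(i)$ for all $i$, so that $p_s$ approximates the Personalized PageRank vector of $s$.
   Context: Weighted forward push procedure (input $p_s,r_s$, graph, $\epsilon,\alpha$): while there exists a node $x$ with $|r_s(x)|>\epsilon d(x)$, perform $\textsc{Push}(x)$: set $p_s(x)\mathrel{+}=\alpha r_s(x)$; for each out-neighbor $y$ of $x$, set $r_s(y)\mathrel{+}=(1-\alpha)r_s(x)w_{(x,y)}/d(x)$; then set $r_s(x)=0$. The Personalized PageRank vector of $s$ is $\pi_s=(1-\alpha)(D^{-1}A)^\top\pi_s+\alpha 1_s$, where $A(x,y)=w_{(x,y)}$ and $D=\operatorname{diag}(d)$; $1_s$ is the indicator vector of $s$ and $1_{i=s}$ is $1$ if $i=s$ and $0$ otherwise. *)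

(* Defs.v *)
From HB Require Import structures.
From mathcomp Require Import all_boot all_order all_algebra.
From Stdlib Require Import Relations.
Set Implicit Arguments. Unset Strict Implicit. Unset Printing Implicit Defensive.
Import Order.TTheory GRing.Theory Num.Theory.
Local Open Scope ring_scope.

(* A weighted directed graph on the finite vertex set V is given by its
   weight function w : V -> V -> R, with w x y = 0 iff (x,y) is not an edge. *)
Section PPR.
Variables (R : realFieldType) (V : finType).

Local Notation weights := (V -> V -> R).

Definition nonneg_weights (w : weights) : Prop := forall x y, 0 <= w x y.

Definition outdeg (w : weights) (x : V) : R := \sum_(y | 0 < w x y) w x y.

Definition ppr_invariant (w : weights) (alpha : R) (s : V) (p r : V -> R) : Prop :=
  forall i : V,
    p i + alpha * r i =
    (1 - alpha) * (\sum_(x | 0 < w x i) w x i * p x / outdeg w x)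
    + alpha * (i == s)%:R.

Definition upd_w (w : weights) (u v : V) (dw : R) : weights :=
  fun x y => if (x == u) && (y == v) then w u v + dw else w x y.

Definition upd_p (w : weights) (p : V -> R) (u : V) (dw : R) : V -> R :=
  fun x => if x == u then p u * ((outdeg w u + dw) / outdeg w u) else p x.

Definition upd_r (w : weights) (alpha : R) (p r : V -> R) (u v : V) (dw : R)
  : V -> R :=
  fun x => r x
    - (if x == u then dw * p u / (alpha * outdeg w u) else 0)
    + (if x == v then (1 - alpha) / alpha * (dw * p u / outdeg w u) else 0).

Fixpoint valid_events (w : weights) (evs : seq (V * V * R)) : Prop :=
  match evs with
  | [::] => True
  | (u, v, dw) :: evs' =>
      [/\ 0 <= w u v + dw, 0 < outdeg w u, 0 < outdeg w u + dw
        & valid_events (upd_w w u v dw) evs']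
  end.

Fixpoint apply_events (alpha : R) (w : weights) (p r : V -> R)
  (evs : seq (V * V * R)) : weights * (V -> R) * (V -> R) :=
  match evs with
  | [::] => (w, p, r)
  | (u, v, dw) :: evs' =>
      apply_events alpha (upd_w w u v dw) (upd_p w p u dw)
                   (upd_r w alpha p r u v dw) evs'
  end.

Definition push (w : weights) (alpha : R) (x : V) (pr : (V -> R) * (V -> R))
  : (V -> R) * (V -> R) :=
  let: (p, r) := pr in
  ((fun y => if y == x then p x + alpha * r x else p y),
   (fun y => (if y == x then 0 else r y)
             + (if 0 < w x y then (1 - alpha) * r x * w x y / outdeg w x
                else 0))).

Definition push_step (w : weights) (alpha eps : R)
  (pr pr' : (V -> R) * (V -> R)) : Prop :=
  exists x : V, eps * outdeg w x < `|pr.2 x| /\ pr' = push w alpha x pr.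

Definition push_terminated (w : weights) (eps : R) (r : V -> R) : Prop :=
  forall x : V, ~ (eps * outdeg w x < `|r x|).

End PPR.

(* Main.v *)
Require Import Defs.
From HB Require Import structures.
From mathcomp Require Import all_boot all_order all_algebra.
From mathcomp Require Import ring lra.
From Stdlib Require Import Relations.
Import Order.TTheory GRing.Theory Num.Theory.
Local Open Scope ring_scope.

Section Aux.
Variables (R : realFieldType) (V : finType).

Lemma sum_pos (f G : V -> R) :
  (forall x, ~~ (0 < f x) -> G x = 0) -> \sum_(x | 0 < f x) G x = \sum_x G x.
Proof.
move=> H; rewrite big_mkcond; apply: eq_bigr => x _.
by case: ifP => // /negbT /H ->.
Qed.

Lemma nonneg_zero {w : V -> V -> R} {x y} :
  nonneg_weights w -> ~~ (0 < w x y) -> w x y = 0.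
Proof.
move=> nn; rewrite lt_def negb_and negbK => /orP [/eqP -> //|].
by rewrite nn.
Qed.

Lemma nonneg_upd {w : V -> V -> R} {u v dw} :
  nonneg_weights w -> 0 <= w u v + dw -> nonneg_weights (upd_w w u v dw).
Proof.
move=> nn h x y; rewrite /upd_w; case: ifP => // /andP [/eqP -> /eqP ->] //.
Qed.

Lemma outdeg_all (w : V -> V -> R) x :
  nonneg_weights w -> outdeg w x = \sum_y w x y.
Proof. by move=> nn; rewrite /outdeg sum_pos // => y /(nonneg_zero nn). Qed.

Lemma outdeg_upd (w : V -> V -> R) u v dw x :
  nonneg_weights w -> 0 <= w u v + dw ->
  outdeg (upd_w w u v dw) x = if x == u then outdeg w u + dw else outdeg w x.
Proof.
move=> nn h; rewrite !outdeg_all //; last exact: nonneg_upd.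
rewrite /upd_w; case: (eqVneq x u) => [->|nxu] /=.
  rewrite (bigD1 v) //= (bigD1 v (P := predT)) //= !eqxx /=.
  rewrite (eq_bigr (fun y => w u y)); first by rewrite addrAC.
  by move=> y /negbTE ->.
by [].
Qed.

Lemma event_inv (alpha : R) (s : V) (w : V -> V -> R) (p r : V -> R) (u v : V) (dw : R) :
  0 < alpha ->
      nonneg_weights w ->
      ppr_invariant w alpha s p r ->
      0 <= w u v + dw ->
      0 < outdeg w u -> 0 < outdeg w u + dw ->
      ppr_invariant (upd_w w u v dw) alpha s (upd_p w p u dw)
                (upd_r w alpha p r u v dw).
Proof.
move=> a0 nn inv h du dudw i.
have nn' := nonneg_upd nn h.
have du0 : outdeg w u != 0 by rewrite gt_eqF.
have dudw0 : outdeg w u + dw != 0 by rewrite gt_eqF.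
have a00 : alpha != 0 by rewrite gt_eqF.
have E := inv i.
rewrite sum_pos in E; last by move=> x /(nonneg_zero nn) ->; rewrite !mul0r.
rewrite sum_pos; last by move=> x /(nonneg_zero nn') ->; rewrite !mul0r.
rewrite (eq_bigr (fun x => w x i * p x / outdeg w x +
          ((x == u) && (i == v))%:R * (dw * p u / outdeg w u))); last first.
  move=> x _; rewrite outdeg_upd // /upd_w /upd_p.
  case: (eqVneq x u) => [->|nxu] /=; last by rewrite mul0r addr0.
  case: (eqVneq i v) => [->|niv] /=.
    by field; rewrite du0 dudw0.
  by field; rewrite du0 dudw0.
rewrite big_split /= -big_distrl /=.
have I : \sum_x ((x == u) && (i == v))%:R = (i == v)%:R :> R.
  by rewrite (bigD1 u) //= eqxx big1 ?addr0 // => x /negbTE ->.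
rewrite I.
rewrite /upd_p /upd_r.
move: E; set S := \sum_x _; move=> E.
have -> : alpha * (i == s)%:R = p i + alpha * r i - (1 - alpha) * S.
  by rewrite E; ring.
case: (eqVneq i u) => [ei|niu]; case: (eqVneq i v) => [ev|niv] /=.
- subst i v; field; by rewrite du0 a00.
- subst i; field; by rewrite du0 a00.
- subst i; field; by rewrite du0 a00.
- ring.
Qed.

Lemma push_inv (alpha : R) (s : V) (w : V -> V -> R) (p r : V -> R) x :
  ppr_invariant w alpha s p r ->
  ppr_invariant w alpha s (push w alpha x (p, r)).1 (push w alpha x (p, r)).2.
Proof.
move=> inv i /=; have E := inv i.
set T := if 0 < w x i then (1 - alpha) * r x * w x i / outdeg w x else 0.
rewrite (eq_bigr (fun y => w y i * p y / outdeg w y +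
     (y == x)%:R * (w x i * (alpha * r x) / outdeg w x))); last first.
  move=> y _; case: (eqVneq y x) => [->|nyx] /=; first by ring.
  by ring.
rewrite big_split /= -big_distrl /=.
have I : \sum_(y | 0 < w y i) (y == x)%:R = ((0 < w x i)%R%:R : R).
  rewrite big_mkcond (bigD1 x) //= eqxx big1 ?addr0; first by case: ifP.
  by move=> y /negbTE ->; case: ifP.
rewrite I; move: E; set S := \sum_(y | _) _; move=> E.
have -> : alpha * (i == s)%:R = p i + alpha * r i - (1 - alpha) * S.
  by rewrite E; ring.
rewrite /T; case: (eqVneq i x) => [->|nix] /=; case: ifP => _; rewrite ?mulr1n ?mulr0n; ring.
Qed.

Lemma rt_inv (alpha eps : R) (s : V) (w : V -> V -> R) a b :
  clos_refl_trans _ (push_step w alpha eps) a b ->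
  ppr_invariant w alpha s a.1 a.2 -> ppr_invariant w alpha s b.1 b.2.
Proof.
elim => [x y [z [_ ->]]|//|x y z _ IH1 _ IH2]; last by move=> h; apply/IH2/IH1.
by case: x => p r /=; apply: push_inv.
Qed.
End Aux.

Theorem theorem1 (R : realFieldType) (V : finType) (alpha eps : R) (s : V) :
  0 < alpha -> alpha < 1 -> 0 < eps ->
  (* single edge event preserves the invariant *)
  (forall (w : V -> V -> R) (p r : V -> R) (u v : V) (dw : R),
      nonneg_weights w ->
      ppr_invariant w alpha s p r ->
      0 <= w u v + dw ->
      0 < outdeg w u -> 0 < outdeg w u + dw ->
      ppr_invariant (upd_w w u v dw) alpha s (upd_p w p u dw)
                (upd_r w alpha p r u v dw))
  /\
  (* a sequence of events followed by weighted forward push *)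
  (forall (w : V -> V -> R) (p r : V -> R) (evs : seq (V * V * R)),
      nonneg_weights w ->
      ppr_invariant w alpha s p r ->
      valid_events w evs ->
      let: (w', p', r') := apply_events alpha w p r evs in
      forall p'' r'' : V -> R,
        clos_refl_trans _ (push_step w' alpha eps) (p', r') (p'', r'') ->
        ppr_invariant w' alpha s p'' r'' /\
        (push_terminated w' eps r'' ->
           forall i : V, `|r'' i| <= eps * outdeg w' i)).
Proof.
move=> a0 a1 e0; split; first by move=> *; apply: event_inv.
move=> w p r evs; elim: evs w p r => [|[[u v] dw] evs IH] w p r nn inv /=.
  move=> _ p'' r'' rt; split; first exact: (rt_inv _ _ _ _ _ _ (p,r) (p'',r'') rt inv).
  by move=> T i; rewrite leNgt; apply/negP/T.
case=> h1 h2 h3 hv; apply: IH => //; first exact: nonneg_upd.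
exact: event_inv.
Qed.
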